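(* Let $G=(V,E)$ be an infinite, connected, locally finite, vertex-transitive graph, $o\in V$, $\Gamma\subset\operatorname{Aut}(G)$ a group acting transitively on $V$, and $\mathbb{P}$ a $\Gamma$-invariant and ergodic probability measure on $\mathbb{R}^V$ with $\mathbb{E}|s(o)|<\infty$. If $\mathbb{E}\,s(o)>1$, then $\mathbb{P}\{s\text{ stabilizes}\}=0$.
   Context: $\Delta u(x)=\sum_{y\sim x}(u(y)-u(x))$. $s:V\to\mathbb{R}$ stabilizes if there exists $f:V\to[0,\infty)$ with $s+\Delta f\le1$ pointwise. $\Gamma$-invariance means $T_\alpha s$ has law $\mathbb{P}$ whenever $s$ does, where $(T_\alpha f)(x)=f(\alpha^{-1}x)$, $\alpha\in\Gamma$; ergodicity is with respect to this $\Gamma$-action. *)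

(* Defs.v *)
From HB Require Import structures.
From mathcomp Require Import all_boot all_order all_algebra.
From mathcomp Require Import all_classical all_reals all_analysis.
Set Implicit Arguments. Unset Strict Implicit. Unset Printing Implicit Defensive.
Import Order.TTheory GRing.Theory Num.Theory.
Local Open Scope classical_set_scope.
Local Open Scope ring_scope.

Definition rfield (R : realType) (V : Type) : Type := V -> R.
HB.instance Definition _ (R : realType) (V : Type) := gen_eqMixin (rfield R V).
HB.instance Definition _ (R : realType) (V : Type) := gen_choiceMixin (rfield R V).
HB.instance Definition _ (R : realType) (V : Type) :=
  isPointed.Build (rfield R V) (fun _ => 0).

Section Defs.
Variables (R : realType) (V : choiceType).
Local Notation rfield := (rfield R V).

(** A locally finite simple graph on V is given by finite neighbour lists. *)
Definition adj (nbrs : V -> seq V) : rel V := fun x y => y \in nbrs x.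

Definition is_simple_graph (nbrs : V -> seq V) : Prop :=
  [/\ forall x, uniq (nbrs x),
      forall x y, adj nbrs x y = adj nbrs y x &
      forall x, ~~ adj nbrs x x].

Definition connected_graph (nbrs : V -> seq V) : Prop :=
  forall x y, exists p : seq V, path (adj nbrs) x p /\ last x p = y.

Definition infinite_graph : Prop := ~ finite_set [set: V].

Definition is_aut (nbrs : V -> seq V) (a : V -> V) : Prop :=
  bijective a /\ forall x y, adj nbrs (a x) (a y) = adj nbrs x y.

Definition vertex_transitive (nbrs : V -> seq V) : Prop :=
  forall x y, exists a, is_aut nbrs a /\ a x = y.

Definition is_inv (a b : V -> V) : Prop := cancel a b /\ cancel b a.

Definition aut_subgroup (nbrs : V -> seq V) (Gam : set (V -> V)) : Prop :=
  [/\ forall a, Gam a -> is_aut nbrs a,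
      Gam id,
      forall a b, Gam a -> Gam b -> Gam (a \o b) &
      forall a, Gam a -> exists b, Gam b /\ is_inv a b].

Definition transitive_action (Gam : set (V -> V)) : Prop :=
  forall x y, exists a, Gam a /\ a x = y.

(** T_a s = s o a^{-1}, written with the inverse b of a *)
Definition Tact (b : V -> V) (s : rfield) : rfield := fun x => s (b x).

Definition laplacian (nbrs : V -> seq V) (u : V -> R) (x : V) : R :=
  \sum_(y <- nbrs x) (u y - u x).

Definition stabilizes (nbrs : V -> seq V) (s : V -> R) : Prop :=
  exists f : V -> R, (forall x, 0 <= f x) /\
    forall x, s x + laplacian nbrs f x <= 1.

Definition coord_sets : set (set rfield) :=
  [set A | exists x (B : set R), measurable B /\ A = (fun s : rfield => s x) @^-1` B].

Local Notation RV := (g_sigma_algebraType coord_sets).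

Definition invariant_measure (Gam : set (V -> V)) (P : set RV -> \bar R) : Prop :=
  forall a b, Gam a -> is_inv a b ->
  forall A : set RV, measurable A -> P (Tact b @^-1` A) = P A.

Definition ergodic_measure (Gam : set (V -> V)) (P : set RV -> \bar R) : Prop :=
  forall A : set RV, measurable A ->
    (forall a b, Gam a -> is_inv a b -> Tact b @^-1` A = A) ->
    P A = 0%E \/ P A = 1%E.

End Defs.

Notation RV R V := (g_sigma_algebraType (@coord_sets R V)).

(* Main.v *)
Require Import Defs.
From HB Require Import structures.
From mathcomp Require Import all_boot all_order all_algebra.
From mathcomp Require Import all_classical all_reals all_analysis.
From mathcomp Require Import ring lra measurable_realfun.
Set Implicit Arguments. Unset Strict Implicit. Unset Printing Implicit Defensive.
Import Order.TTheory GRing.Theory Num.Theory.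
Local Open Scope classical_set_scope.
Local Open Scope ring_scope.

Section Aux.
Variables (R : realType) (V : choiceType) (nbrs : V -> seq V).
Local Notation deg x := ((size (nbrs x))%:R : R).

Fixpoint uk (k : nat) (s : V -> R) (x : V) : R :=
  if k is k'.+1 then Num.max 0 ((s x - 1 + \sum_(y <- nbrs x) uk k' s y) / deg x)
  else 0.

Lemma uk_ge0 k s x : 0 <= uk k s x.
Proof. by case: k => //= k; rewrite le_max lexx. Qed.

Lemma sum_cst_seq (l : seq V) (c : R) : \sum_(y <- l) c = (size l)%:R * c.
Proof.
elim: l => [|y l IH]; rewrite ?big_nil ?big_cons ?IH /= ?mul0r //.
by rewrite -add1n natrD mulrDl mul1r.
Qed.

Lemma lap_eq (f : V -> R) x :
  laplacian nbrs f x = \sum_(y <- nbrs x) f y - deg x * f x.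
Proof. by rewrite /laplacian sumrB sum_cst_seq. Qed.

Lemma uk_le_sol s f : (forall x, 0 < size (nbrs x))%N ->
  (forall x, 0 <= f x) -> (forall x, s x + laplacian nbrs f x <= 1) ->
  forall k x, uk k s x <= f x.
Proof.
move=> dpos f0 sol k; elim: k => [|k IH] x /=; first exact: f0.
rewrite ge_max f0 /= ler_pdivrMr ?ltr0n ?dpos //.
have h1 : \sum_(y <- nbrs x) uk k s y <= \sum_(y <- nbrs x) f y.
  by apply: ler_sum => y _; exact: IH.
have := sol x; rewrite lap_eq => h2.
lra.
Qed.

Lemma key_ineq k s x : (0 < size (nbrs x))%N ->
  s x - 1 + \sum_(y <- nbrs x) uk k s y <= deg x * uk k.+1 s x.
Proof.
move=> dpos /=.
have dp : 0 < deg x by rewrite ltr0n.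
rewrite mulrC -ler_pdivrMr // le_max; apply/orP; right; exact: lexx.
Qed.

Lemma perm_nbrs b : is_simple_graph nbrs -> bijective b ->
  (forall x y, adj nbrs (b x) (b y) = adj nbrs x y) ->
  forall x, perm_eq (map b (nbrs x)) (nbrs (b x)).
Proof.
case=> un _ _ bb hb x; apply: uniq_perm.
- by rewrite map_inj_uniq ?un //; exact: bij_inj.
- exact: un.
move=> z; case: bb => c bc cb.
have -> : z = b (c z) by rewrite cb.
rewrite mem_map; last exact: (can_inj bc).
have := hb x (c z); rewrite /adj => ->; done.
Qed.

Lemma uk_T b : is_simple_graph nbrs -> bijective b ->
  (forall x y, adj nbrs (b x) (b y) = adj nbrs x y) ->
  forall k s x, uk k (fun x => s (b x)) x = uk k s (b x).
Proof.
move=> sg bb hb k s; elim: k => [|k IH] x //=.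
have hp := perm_nbrs sg bb hb x.
rewrite (eq_big_seq (fun y => uk k s (b y))); last by move=> y _; exact: IH.
rewrite -(big_map b predT (uk k s)) (perm_big _ hp) /=.
by rewrite -(perm_size hp) size_map.
Qed.

Lemma coord_meas x : measurable_fun setT (fun s : RV R V => s x).
Proof.
move=> _ B mB; rewrite setTI; apply: sub_sigma_algebra; exists x, B; split => //.
Qed.

Lemma uk_meas k x : measurable_fun setT (fun s : RV R V => uk k s x).
Proof.
elim: k x => [|k IH] x /=; first exact: measurable_cst.
apply: measurable_maxr; first exact: measurable_cst.
apply: measurable_funM; last exact: measurable_cst.
apply: measurable_funD; last exact: measurable_sum.
apply: measurable_funB; [exact: coord_meas|exact: measurable_cst].
Qed.

End Aux.


Section Aux2.
Variables (R : realType) (V : choiceType) (nbrs : V -> seq V).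
Local Notation deg x := ((size (nbrs x))%:R : R).
Local Notation uk := (uk nbrs).

Lemma le_sum_mem (l : seq V) (g : V -> R) y : (forall z, 0 <= g z) ->
  y \in l -> g y <= \sum_(z <- l) g z.
Proof.
move=> g0; elim: l => [|z l IH] //; rewrite inE big_cons => /orP[/eqP->|yl].
  by rewrite lerDl sumr_ge0.
by apply: le_trans (IH yl) _; rewrite lerDr.
Qed.

Definition bnd (s : V -> R) x := exists M : R, forall k, uk k s x <= M.

Lemma bnd_nbr s x y : (0 < size (nbrs x))%N -> bnd s x -> y \in nbrs x -> bnd s y.
Proof.
move=> dp [M hM] yx; exists (deg x * M + 1 - s x) => k.
have h1 := key_ineq k s dp.
have h2 := le_sum_mem (uk_ge0 nbrs k s) yx.
have h3 : deg x * uk k.+1 s x <= deg x * M by rewrite ler_wpM2l ?ler0n.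
lra.
Qed.

Lemma bnd_path s : (forall x, 0 < size (nbrs x))%N -> forall p x,
  path (adj nbrs) x p -> bnd s x -> bnd s (last x p).
Proof.
move=> dp; elim=> [|z p IH] x //= /andP[xz pz] bx.
by apply: IH => //; apply: bnd_nbr bx xz.
Qed.

Lemma bnd_conn s : (forall x, 0 < size (nbrs x))%N -> connected_graph nbrs ->
  forall x y, bnd s x -> bnd s y.
Proof.
move=> dp cn x y bx; have [p [hp <-]] := cn x y; exact: bnd_path.
Qed.

Lemma dpos : infinite_graph V -> connected_graph nbrs -> forall x, (0 < size (nbrs x))%N.
Proof.
move=> inf cn x.
have [y yx] : exists y, y != x.
  apply/not_existsP => hy; apply: inf.
  have -> : [set: V] = [set x].
    apply/seteqP; split => z // _; have := hy z; rewrite /= => /negP.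
    by rewrite negbK => /eqP.
  exact: finite_set1.
have [[|z p] [hp hl]] := cn x y.
  by move: yx; rewrite -hl /= eqxx.
by move: hp => /= /andP[]; rewrite /adj; case: (nbrs x).
Qed.

End Aux2.


Section Meas.
Variables (R : realType) (V : choiceType) (nbrs : V -> seq V) (o : V).
Local Notation uk := (uk nbrs).

Definition Bset (M : nat) : set (RV R V) := [set s | forall k, uk k s o <= M%:R].
Definition Nset : set (RV R V) := \bigcup_M Bset M.

Lemma Bset_meas M : measurable (Bset M).
Proof.
have -> : Bset M = \bigcap_k ((fun s : RV R V => uk k s o) @^-1` `]-oo, M%:R]).
  apply/seteqP; split => s /= hs.
    by move=> k _ /=; rewrite in_itv /= hs.
  by move=> k; have := hs k I; rewrite /= in_itv.
apply: bigcapT_measurable => k; rewrite -[X in measurable X]setTI.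
by apply: uk_meas => //; exact: measurable_itv.
Qed.

Lemma Nset_meas : measurable Nset.
Proof. by apply: bigcupT_measurable => M; exact: Bset_meas. Qed.

Lemma Nset_bnd (s : RV R V) : Nset s <-> bnd nbrs s o.
Proof.
split; first by case=> M _ hM; exists M%:R.
case=> M hM; exists (Num.bound `|M|) => // k.
apply: le_trans (hM k) _; apply: le_trans (ler_norm M) _.
exact/ltW/archi_boundP.
Qed.

Lemma Tact_meas (b : V -> V) : measurable_fun setT (Tact b : RV R V -> RV R V).
Proof.
apply: (@measurability _ _ (RV R V) (RV R V) setT (Tact b) (@coord_sets R V)) => //.
move=> _ [A [x [B [mB ->]]] <-].
apply: sub_sigma_algebra; exists (b x), B; split => //.
by rewrite setTI.
Qed.

Lemma integral_T (P : probability (RV R V) R) (Gam : set (V -> V)) a b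
  (g : RV R V -> \bar R) :
  invariant_measure Gam P -> Gam a -> is_inv a b ->
  measurable_fun setT g -> (forall s, (0 <= g s)%E) ->
  (\int[P]_s g (Tact b s) = \int[P]_s g s)%E.
Proof.
move=> inv Ga iab mg g0.
have := @ge0_integral_pushforward _ _ _ _ _ _ (Tact_meas b) P setT g measurableT mg
  (fun s _ => g0 s).
rewrite preimage_setT => <-.
apply: eq_measure_integral; first exact: Tact_meas.
by move=> ? A mA _ /=; exact: (inv a b Ga iab A mA).
Qed.

End Meas.


Section Ptw.
Variables (R : realType) (V : choiceType) (nbrs : V -> seq V) (o : V).
Local Notation uk := (uk nbrs).
Local Notation deg x := ((size (nbrs x))%:R : R).

Definition posp (s : RV R V) : R := Num.max (s o) 0.
Definition negp (s : RV R V) : R := Num.max (- s o) 0.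
Definition phi k (M : nat) (s : V -> R) x : R := Num.min (uk k s x) M%:R.

Lemma posneg s : [/\ posp s - negp s = s o, 0 <= posp s, 0 <= negp s & `|s o| = posp s + negp s].
Proof.
have [h|h] := lerP 0 (s o).
  have h' : - s o <= 0 by lra.
  have -> : posp s = s o by apply/max_idPl.
  have -> : negp s = 0 by apply/max_idPr.
  rewrite ger0_norm //; split => //; lra.
have h1 : s o <= 0 by lra.
have h2 : 0 <= - s o by lra.
have -> : posp s = 0 by apply/max_idPr.
have -> : negp s = - s o by apply/max_idPl.
rewrite ltr0_norm //; split => //; lra.
Qed.

Lemma phi_ge0 k M s x : 0 <= phi k M s x.
Proof. by rewrite /phi le_min uk_ge0 ler0n. Qed.

Lemma phi_le k M s x : phi k M s x <= M%:R.
Proof. by rewrite /phi ge_min lexx orbT. Qed.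

Lemma pointwise k M (s : RV R V) : (0 < size (nbrs o))%N ->
  posp s * \1_(Bset nbrs o M) s + \sum_(y <- nbrs o) phi k M s y
  <= 1 + negp s + deg o * phi k.+1 M s o.
Proof.
move=> dp; have [hpn hp hn _] := posneg s.
have hi : 0 <= (\1_(Bset nbrs o M) s : R) <= 1.
  by rewrite /indic; case: (_ \in _); rewrite /= ?lexx ?ler01.
have [h|h] := lerP (uk k.+1 s o) M%:R.
  have -> : phi k.+1 M s o = uk k.+1 s o by apply/min_idPl.
  rewrite /phi.
  have h1 : \sum_(y <- nbrs o) Num.min (uk k s y) M%:R <= \sum_(y <- nbrs o) uk k s y.
    by apply: ler_sum => y _; rewrite ge_min lexx.
  have h2 := key_ineq k s dp.
  have h3 : posp s * \1_(Bset nbrs o M) s <= posp s.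
    by rewrite ler_piMr //; case/andP: hi.
  lra.
have h0 : \1_(Bset nbrs o M) s = 0 :> R.
  rewrite /indic; case: (boolP (s \in _)) => // /set_mem /(_ k.+1) h'.
  lra.
have -> : phi k.+1 M s o = M%:R by apply/min_idPr; exact: ltW.
rewrite h0 mulr0 add0r /phi.
have h1 : \sum_(y <- nbrs o) Num.min (uk k s y) M%:R <= \sum_(y <- nbrs o) (M%:R : R).
  by apply: ler_sum => y _; rewrite ge_min lexx orbT.
rewrite sum_cst_seq in h1.
lra.
Qed.

End Ptw.


Section IntH.
Variables (R : realType) (V : choiceType) (P : probability (RV R V) R).

Lemma intD (f g : RV R V -> R) : measurable_fun setT f -> measurable_fun setT g ->
  (forall s, 0 <= f s) -> (forall s, 0 <= g s) ->
  (\int[P]_s (f s + g s)%:E = \int[P]_s (f s)%:E + \int[P]_s (g s)%:E)%E.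
Proof.
move=> mf mg f0 g0.
under eq_integral do rewrite EFinD.
rewrite ge0_integralD //.
- by move=> s _; rewrite lee_fin.
- exact/measurable_EFinP.
- by move=> s _; rewrite lee_fin.
- exact/measurable_EFinP.
Qed.

Lemma intZ (c : R) (f : RV R V -> R) : measurable_fun setT f -> 0 <= c ->
  (forall s, 0 <= f s) ->
  (\int[P]_s (c * f s)%:E = c%:E * \int[P]_s (f s)%:E)%E.
Proof.
move=> mf c0 f0.
under eq_integral do rewrite EFinM.
rewrite ge0_integralZl //.
- exact/measurable_EFinP.
- by move=> s _; rewrite lee_fin.
Qed.

Lemma intc (c : R) : (\int[P]_s (c%:E : \bar R) = c%:E)%E.
Proof.
rewrite (integral_cst P measurableT c%:E).
transitivity (c%:E * 1)%E; last by rewrite mule1.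
congr (_ * _)%E; exact: probability_setT.
Qed.

Lemma int1 : (\int[P]_s (1%:E : \bar R) = 1)%E.
Proof. exact: intc. Qed.

Lemma int_le (f g : RV R V -> R) : measurable_fun setT f -> measurable_fun setT g ->
  (forall s, 0 <= f s) -> (forall s, f s <= g s) ->
  (\int[P]_s (f s)%:E <= \int[P]_s (g s)%:E)%E.
Proof.
move=> mf mg f0 fg; apply: ge0_le_integral => //.
- by move=> s _; rewrite lee_fin.
- exact/measurable_EFinP.
- exact/measurable_EFinP.
- by move=> s _; rewrite lee_fin.
Qed.

Lemma int_fin (f : RV R V -> R) : measurable_fun setT f ->
  (forall s, 0 <= f s) -> (\int[P]_s (f s)%:E < +oo)%E ->
  exists r, (\int[P]_s (f s)%:E = r%:E)%E /\ 0 <= r.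
Proof.
move=> mf f0 hf.
have h0 : (0 <= \int[P]_s (f s)%:E)%E by apply: integral_ge0 => s _; rewrite lee_fin.
exists (fine (\int[P]_s (f s)%:E)); split.
  by rewrite fineK // ge0_fin_numE.
by rewrite fine_ge0.
Qed.

End IntH.


Section Main.
Variables (R : realType) (V : choiceType) (nbrs : V -> seq V)
  (Gam : set (V -> V)) (o : V) (P : probability (RV R V) R).
Hypotheses (sg : is_simple_graph nbrs) (dp : forall x, (0 < size (nbrs x))%N)
  (sub : aut_subgroup nbrs Gam) (tr : transitive_action Gam)
  (inv : invariant_measure Gam P).
Local Notation deg x := ((size (nbrs x))%:R : R).

Lemma aut_inv a b : Gam a -> is_inv a b ->
  bijective b /\ (forall x y, adj nbrs (b x) (b y) = adj nbrs x y).
Proof.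
move=> Ga [ab ba]; case: sub => haut _ _ _; have [_ ha] := haut a Ga.
split; first by exists a.
by move=> x y; rewrite -ha !ba.
Qed.

Lemma phi_meas k M x : measurable_fun setT (fun s : RV R V => phi nbrs k M s x).
Proof. exact: (measurable_minr (uk_meas nbrs k x) (measurable_cst _)). Qed.

Lemma pos_meas : measurable_fun setT (@posp R V o).
Proof. exact: (measurable_maxr (coord_meas o) (measurable_cst _)). Qed.

Lemma neg_meas : measurable_fun setT (@negp R V o).
Proof. exact: (measurable_maxr (measurable_funN (coord_meas o)) (measurable_cst _)). Qed.

Lemma abs_meas : measurable_fun setT (fun s : RV R V => `|s o|).
Proof. apply: measurableT_comp; [exact: normr_measurable|exact: coord_meas]. Qed.

Lemma posB_meas M : measurable_fun setT
  (fun s : RV R V => posp o s * \1_(Bset nbrs o M) s).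
Proof. apply: measurable_funM; [exact: pos_meas|apply: measurable_indic; exact: Bset_meas]. Qed.

Lemma phi_inv k M y :
  (\int[P]_s (phi nbrs k M s y)%:E = \int[P]_s (phi nbrs k M s o)%:E)%E.
Proof.
have [a [Ga ay]] := tr y o.
case: sub => _ _ _ hinv; have [b [_ iab]] := hinv a Ga.
have [bb hb] := aut_inv Ga iab.
have boy : b o = y by rewrite -ay; case: iab => ab _; exact: ab.
rewrite -(integral_T (g := fun s : RV R V => (phi nbrs k M s o)%:E) inv Ga iab);
  last 2 first.
- by apply/measurable_EFinP; exact: phi_meas.
- by move=> s; rewrite lee_fin phi_ge0.
apply: eq_integral => s _; rewrite /phi /Tact (uk_T sg bb hb) boy //.
Qed.


Lemma ak_fin k M : exists A : R,
  (\int[P]_s (phi nbrs k M s o)%:E = A%:E)%E /\ 0 <= A <= M%:R.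
Proof.
have hle : (\int[P]_s (phi nbrs k M s o)%:E <= (M%:R)%:E)%E.
  apply: le_trans (int_le P (phi_meas k M o) (measurable_cst (M%:R : R))
    (fun s => phi_ge0 nbrs k M s o) (fun s => phi_le nbrs k M s o)) _.
  by rewrite intc.
have [A [hA A0]] := int_fin (P:=P) (phi_meas k M o) (fun s => phi_ge0 nbrs k M s o)
  (le_lt_trans hle (ltry _)).
exists A; split => //; rewrite hA lee_fin in hle; by rewrite A0 hle.
Qed.

Lemma int_ineq k M X Y A0 A1 :
  (\int[P]_s (posp o s * \1_(Bset nbrs o M) s)%:E = X%:E)%E ->
  (\int[P]_s (negp o s)%:E = Y%:E)%E ->
  (\int[P]_s (phi nbrs k M s o)%:E = A0%:E)%E ->
  (\int[P]_s (phi nbrs k.+1 M s o)%:E = A1%:E)%E ->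
  X + deg o * A0 <= 1 + Y + deg o * A1.
Proof.
move=> hX hY hA0 hA1.
have mS : measurable_fun setT
    (fun s : RV R V => \sum_(y <- nbrs o) phi nbrs k M s y).
  by apply: measurable_sum => y; exact: phi_meas.
have S0 : forall s : RV R V, 0 <= \sum_(y <- nbrs o) phi nbrs k M s y.
  by move=> s; apply: sumr_ge0 => y _; exact: phi_ge0.
have mB := posB_meas M.
have B0 : forall s : RV R V, 0 <= posp o s * \1_(Bset nbrs o M) s.
  move=> s; have [_ p0 _ _] := posneg o s; by apply: mulr_ge0.
have m1N : measurable_fun setT (fun s : RV R V => 1 + negp o s).
  by apply: measurable_funD; [exact: measurable_cst|exact: neg_meas].
have mD : measurable_fun setT (fun s : RV R V => deg o * phi nbrs k.+1 M s o).
  by apply: measurable_funM; [exact: measurable_cst|exact: phi_meas].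
have H := int_le P
  (f := fun s => posp o s * \1_(Bset nbrs o M) s + \sum_(y <- nbrs o) phi nbrs k M s y)
  (g := fun s => 1 + negp o s + deg o * phi nbrs k.+1 M s o)
  (measurable_funD mB mS) (measurable_funD m1N mD)
  (fun s => addr_ge0 (B0 s) (S0 s)) (fun s => pointwise k M s (dp o)).
rewrite (intD P (f := fun s => posp o s * \1_(Bset nbrs o M) s)
  (g := fun s => \sum_(y <- nbrs o) phi nbrs k M s y)) // in H.
have hs : (\int[P]_s (\sum_(y <- nbrs o) phi nbrs k M s y)%:E = (deg o * A0)%:E)%E.
  under eq_integral do rewrite -sumEFin.
  rewrite ge0_integral_sum //; last 2 first.
  - by move=> y; apply/measurable_EFinP; exact: phi_meas.
  - by move=> y s _; rewrite lee_fin phi_ge0.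
  under eq_bigr do rewrite phi_inv hA0.
  by rewrite sumEFin sum_cst_seq.
rewrite hs hX in H.
rewrite (intD P (f := fun s => 1 + negp o s)
  (g := fun s => deg o * phi nbrs k.+1 M s o)) // in H; last 2 first.
- by move=> s; have [_ _ n0 _] := posneg o s; apply: addr_ge0.
- by move=> s; apply: mulr_ge0; [exact: ler0n|exact: phi_ge0].
rewrite (intD P (f := fun s => 1) (g := fun s => negp o s)) // in H; last 2 first.
- exact: neg_meas.
- by move=> s; have [_ _ n0 _] := posneg o s.
rewrite intc hY intZ // ?hA1 in H; last 2 first.
- exact: phi_meas.
- by move=> s; exact: phi_ge0.
have H2 : ((X + deg o * A0)%:E <= (1 + Y + deg o * A1)%:E)%E by exact: H.
by rewrite lee_fin in H2.
Qed.

End Main.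


Lemma tele (R : realType) (c D M : R) (a : nat -> R) : 0 <= D ->
  (forall k, c + D * a k <= D * a k.+1) -> (forall k, 0 <= a k <= M) -> c <= 0.
Proof.
move=> D0 hk ha.
have H : forall k, k%:R * c + D * a 0%N <= D * a k.
  elim=> [|k IH]; first by rewrite mul0r add0r.
  have := hk k; rewrite -addn1 natrD mulrDl mul1r; lra.
rewrite leNgt; apply/negP => c0.
have M0 : 0 <= M by have /andP[h1 h2] := ha 0%N; exact: le_trans h2.
set n := Num.bound (D * M / c).
have h1 : D * M / c < n%:R.
  apply: archi_boundP; apply: divr_ge0; [exact: mulr_ge0|exact: ltW].
have h2 : D * M < n%:R * c by rewrite -ltr_pdivrMr.
have h3 : D * a n <= D * M by rewrite ler_wpM2l //; case/andP: (ha n).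
have h4 : 0 <= D * a 0%N by apply: mulr_ge0 => //; case/andP: (ha 0%N).
have := H n; lra.
Qed.

Section Main2.
Variables (R : realType) (V : choiceType) (nbrs : V -> seq V)
  (Gam : set (V -> V)) (o : V) (P : probability (RV R V) R).
Hypotheses (sg : is_simple_graph nbrs) (dp : forall x, (0 < size (nbrs x))%N)
  (sub : aut_subgroup nbrs Gam) (tr : transitive_action Gam)
  (inv : invariant_measure Gam P)
  (habs : (\int[P]_s `|s o|%:E < +oo)%E).
Local Notation deg x := ((size (nbrs x))%:R : R).

Lemma posB_le M Y : (\int[P]_s (negp o s)%:E = Y%:E)%E ->
  (\int[P]_s (posp o s * \1_(Bset nbrs o M) s)%:E <= (1 + Y)%:E)%E.
Proof.
move=> hY.
have B0 : forall s : RV R V, 0 <= posp o s * \1_(Bset nbrs o M) s.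
  by move=> s; have [_ p0 _ _] := posneg o s; apply: mulr_ge0.
have Babs : forall s : RV R V, posp o s * \1_(Bset nbrs o M) s <= `|s o|.
  move=> s; have [_ p0 n0 ->] := posneg o s.
  have : \1_(Bset nbrs o M) s <= 1 :> R by rewrite /indic; case: (s \in Bset nbrs o M).
  move=> hi; have : posp o s * \1_(Bset nbrs o M) s <= posp o s by rewrite ler_piMr.
  lra.
have [X [hX X0]] := int_fin (P:=P) (posB_meas nbrs o M) B0
  (le_lt_trans (int_le P (posB_meas nbrs o M) (abs_meas o) B0 Babs) habs).
rewrite hX lee_fin.
pose a k := fine (\int[P]_s (phi nbrs k M s o)%:E).
have ha k : (\int[P]_s (phi nbrs k M s o)%:E = (a k)%:E)%E /\ 0 <= a k <= M%:R.
  have [A [hA hA0]] := ak_fin nbrs o P k M.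
  by rewrite /a hA /=.
suff : X - 1 - Y <= 0 by lra.
apply: (@tele _ _ (deg o) M%:R a) => //; last by move=> k; case: (ha k).
move=> k.
have := int_ineq sg dp sub tr inv hX hY (ha k).1 (ha k.+1).1.
lra.
Qed.


Lemma negY : exists Y, (\int[P]_s (negp o s)%:E = Y%:E)%E /\ 0 <= Y.
Proof.
have n0 : forall s : RV R V, 0 <= negp o s by move=> s; have [_ _ h _] := posneg o s.
have nabs : forall s : RV R V, negp o s <= `|s o|.
  by move=> s; have [_ p0 n1 ->] := posneg o s; lra.
exact: (int_fin (P:=P) (neg_meas o) n0
  (le_lt_trans (int_le P (neg_meas o) (abs_meas o) n0 nabs) habs)).
Qed.

Lemma pos_le Y : P (Nset nbrs o) = 1%E ->
  (\int[P]_s (negp o s)%:E = Y%:E)%E ->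
  (\int[P]_s (posp o s)%:E <= (1 + Y)%:E)%E.
Proof.
move=> N1 hY.
pose g : (RV R V -> \bar R)^nat := fun M s => (posp o s * \1_(Bset nbrs o M) s)%:E.
have p0 : forall s : RV R V, 0 <= posp o s by move=> s; have [_ h _ _] := posneg o s.
have g0 : forall M s, (0 <= g M s)%E.
  by move=> M s; rewrite lee_fin; apply: mulr_ge0.
have mg : forall M, measurable_fun setT (g M).
  by move=> M; apply/measurable_EFinP; exact: posB_meas.
have gnd : forall s, nondecreasing_seq (g ^~ s).
  move=> s m n mn; rewrite lee_fin; apply: ler_wpM2l => //.
  rewrite /indic; case: (boolP (s \in Bset nbrs o m)) => hm.
    have -> : s \in Bset nbrs o n.
      apply: mem_set => k; apply: le_trans (set_mem hm k) _; by rewrite ler_nat.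
    by [].
  by case: (s \in Bset nbrs o n).
have mc := monotone_convergence P measurableT mg (fun M s _ => g0 M s) (fun s _ => gnd s).
have cv : forall s, cvgn (g ^~ s) := fun s => ereal_nondecreasing_is_cvgn (gnd s).
have mlim : measurable_fun setT (fun s => limn (g ^~ s)).
  exact: (emeasurable_fun_cvg g _ (fun M => mg M) (fun s _ => cv s)).
have lim0 : forall s, (0 <= limn (g ^~ s))%E.
  by move=> s; apply: lime_ge (cv s) _; apply: nearW => M; exact: g0.
have hlim : (limn (fun M => \int[P]_s g M s) <= (1 + Y)%:E)%E.
  apply: lime_le.
    apply: ereal_nondecreasing_is_cvgn => m n mn.
    by apply: ge0_le_integral => // s _; exact: gnd.
  by exists 0%N => // M _; exact: posB_le.
have mN : measurable (@Nset R V nbrs o) by exact: Nset_meas.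
have hN : P (~` Nset nbrs o) = 0%E.
  by rewrite probability_setC // N1 subee.
have E : (\int[P]_s (posp o s)%:E = \int[P]_(s in Nset nbrs o) (posp o s)%:E
    + \int[P]_(s in ~` Nset nbrs o) (posp o s)%:E)%E.
  rewrite -integral_setU ?setUv //.
  - exact: measurableC.
  - by apply/measurable_EFinP; exact: pos_meas.
  - by rewrite /disj_set setICr.
rewrite E (null_set_integral (measurableC mN)) ?adde0 //; last first.
  by apply/measurable_EFinP; apply: measurable_funS (pos_meas o) => //.
apply: (@le_trans _ _ (\int[P]_(s in Nset nbrs o) limn (g ^~ s))%E).
  apply: ge0_le_integral => //.
  - by move=> s _; rewrite lee_fin.
  - by apply/measurable_EFinP; apply: measurable_funS (pos_meas o) => //.
  - by apply: measurable_funS mlim => //.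
  move=> s [M0 _ hM0]; apply: lime_ge (cv s) _.
  exists M0 => // n /= hn.
  rewrite /g /indic.
  have -> : s \in Bset nbrs o n.
    apply: mem_set => k; apply: le_trans (hM0 k) _; by rewrite ler_nat.
  by rewrite mulr1.
apply: le_trans (ge0_subset_integral P mN measurableT mlim (fun s _ => lim0 s) (@subsetT _ _)) _.
by rewrite mc.
Qed.

End Main2.

Lemma integral_split (R : realType) (V : choiceType) (o : V) (P : probability (RV R V) R) :
  (\int[P]_s (s o)%:E = \int[P]_s (posp o s)%:E - \int[P]_s (negp o s)%:E)%E.
Proof.
rewrite integralE; congr (_ - _)%E; apply: eq_integral => s _.
  rewrite funeposE; have [h|h] := lerP 0 (s o).
    have -> : posp o s = s o by apply/max_idPl.
    by apply/max_idPl; rewrite lee_fin.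
  have -> : posp o s = 0 by apply/max_idPr; exact: ltW.
  by apply/max_idPr; rewrite lee_fin ltW.
rewrite funenegE -EFinN; have [h|h] := lerP 0 (s o).
  have -> : negp o s = 0 by apply/max_idPr; rewrite oppr_le0.
  by apply/max_idPr; rewrite lee_fin oppr_le0.
have -> : negp o s = - s o by apply/max_idPl; rewrite oppr_ge0 ltW.
by apply/max_idPl; rewrite lee_fin oppr_ge0 ltW.
Qed.


Unset Implicit Arguments.


Theorem lemma4p1 (R : realType) (V : choiceType) (nbrs : V -> seq V)
  (Gam : set (V -> V)) (o : V) (P : probability (RV R V) R) :
  is_simple_graph nbrs -> infinite_graph V -> connected_graph nbrs ->
  vertex_transitive nbrs ->
  aut_subgroup nbrs Gam -> transitive_action Gam ->
  invariant_measure Gam P -> ergodic_measure Gam P ->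
  (\int[P]_s `|s o|%:E < +oo)%E ->
  (1%:E < \int[P]_s (s o)%:E)%E ->
  P.-negligible [set s : RV R V | stabilizes nbrs s].
Proof.
move=> sg inf cn vt sub tr inv erg habs hgt.
have dp := dpos inf cn.
have mN : measurable (@Nset R V nbrs o) by exact: Nset_meas.
exists (@Nset R V nbrs o); split => //; last first.
  move=> s [f [f0 hf]]; apply/Nset_bnd; exists (f o) => k.
  exact: (uk_le_sol dp f0 hf k o).
have hinvN : forall a b, Gam a -> is_inv a b -> Tact b @^-1` (@Nset R V nbrs o) = (@Nset R V nbrs o).
  move=> a b Ga iab; have [bb hb] := aut_inv sub Ga iab.
  apply/seteqP; split => s /=.
    move/Nset_bnd => [M hM]; apply/Nset_bnd.
    apply: (bnd_conn dp cn (x := b o)); exists M => k.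
    by rewrite -(uk_T sg bb hb); exact: hM.
  move/Nset_bnd => hs; apply/Nset_bnd.
  have [M hM] := bnd_conn dp cn (b o) hs.
  by exists M => k; rewrite /Tact (uk_T sg bb hb).
case: (erg _ mN hinvN) => // N1.
exfalso.
have [Y [hY Y0]] := negY habs.
have hp := pos_le sg dp sub tr inv habs N1 hY.
have p0 : forall s : RV R V, 0 <= posp o s by move=> s; have [_ h _ _] := posneg o s.
have [X [hX _]] := int_fin (P:=P) (pos_meas o) p0 (le_lt_trans hp (ltry _)).
rewrite integral_split hX hY in hgt.
have h2 : (1%:E < (X - Y)%:E)%E by exact: hgt.
rewrite lte_fin in h2.
rewrite hX lee_fin in hp.
clear -h2 hp; lra.
Qed.
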